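(* Let $n\ge4$, $k=3$, and let $d$ be an integer. Then every allowable critical data set for type $(n,d,3)$ satisfies $C_{12}>0$.
   Context: Let $0<k<n$ and $d$ be integers. Write $d=na-t$ with integers $a,t$, $0\le t<n$, and $ka=l(n-k)+t+m$ with integers $l,m$, $0\le m<n-k$. A critical data set for type $(n,d,k)$ is a tuple $A_c=(\alpha_c,n_1,d_1,k_1,n_2,d_2,k_2)$ with integers $n_i\ge1$, $k_i\ge0$, $d_i$ such that $n_1+n_2=n$, $d_1+d_2=d$, $k_1+k_2=k$, $\frac{d_2}{n_2}>\frac{d_1}{n_1}$, $\frac{k_1}{n_1}>\frac{k_2}{n_2}$, and $\alpha_c=\frac{d_2n_1-d_1n_2}{n_2k_1-n_1k_2}$. It is allowable if moreover $\frac tk<\alpha_c<\frac{ln+t}{k}$, $d\ge\frac1k(n^2-1)-(n-k)$, $d_1\ge\frac1{k_1}(n_1^2-1)-(n_1-k_1)$, and either ($k_2=0$ and $n_2=1$) or ($k_2\ge1$ and $d_2\ge\frac1{k_2}(n_2^2-1)-(n_2-k_2)$). Define $C_{12}=-n_1n_2-d_2n_1+d_1n_2+k_1(d_2+n_2-k_2)$. *)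

(* Defs.v *)
From HB Require Import structures.
From mathcomp Require Import all_boot all_order all_algebra.
Set Implicit Arguments. Unset Strict Implicit. Unset Printing Implicit Defensive.
Import Order.TTheory GRing.Theory Num.Theory.
Local Open Scope ring_scope.

Definition Q (z : int) : rat := z%:~R.

Definition type_params (n d k a t l m : int) : Prop :=
  [/\ d = n * a - t, 0 <= t < n,
      k * a = l * (n - k) + t + m & 0 <= m < n - k].

Definition alpha_c (n1 d1 k1 n2 d2 k2 : int) : rat :=
  (Q d2 * Q n1 - Q d1 * Q n2) / (Q n2 * Q k1 - Q n1 * Q k2).

Definition critical_data_set (n d k : int) (alpha : rat)
    (n1 d1 k1 n2 d2 k2 : int) : Prop :=
  [/\ 1 <= n1 /\ 1 <= n2, 0 <= k1 /\ 0 <= k2,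
      [/\ n1 + n2 = n, d1 + d2 = d & k1 + k2 = k],
      Q d2 / Q n2 > Q d1 / Q n1 /\ Q k1 / Q n1 > Q k2 / Q n2 &
      alpha = alpha_c n1 d1 k1 n2 d2 k2].

Definition deg_bound (n d k : int) : Prop :=
  Q d >= (Q n ^+ 2 - 1) / Q k - (Q n - Q k).

(** Allowable critical data set, where t and l are the integers of
    [type_params] for the type (n,d,k). *)
Definition allowable (n d k t l : int) (alpha : rat)
    (n1 d1 k1 n2 d2 k2 : int) : Prop :=
  [/\ critical_data_set n d k alpha n1 d1 k1 n2 d2 k2,
      Q t / Q k < alpha < (Q l * Q n + Q t) / Q k,
      deg_bound n d k,
      deg_bound n1 d1 k1 &
      ((k2 = 0 /\ n2 = 1) \/ (1 <= k2 /\ deg_bound n2 d2 k2))].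

Definition C12 (n1 d1 k1 n2 d2 k2 : int) : int :=
  - n1 * n2 - d2 * n1 + d1 * n2 + k1 * (d2 + n2 - k2).

(* Main.v *)
Require Import Defs.
From HB Require Import structures.
From mathcomp Require Import all_boot all_order all_algebra.
From mathcomp Require Import zify ring.
Import Order.TTheory GRing.Theory Num.Theory.
Local Open Scope ring_scope.

Lemma QD x y : Q (x + y) = Q x + Q y. Proof. by rewrite /Q rmorphD. Qed.
Lemma QB x y : Q (x - y) = Q x - Q y. Proof. by rewrite /Q rmorphB. Qed.
Lemma QM x y : Q (x * y) = Q x * Q y. Proof. by rewrite /Q rmorphM. Qed.
Lemma Q1 : Q 1 = 1. Proof. by rewrite /Q. Qed.
Lemma Qlt x y : (Q x < Q y) = (x < y). Proof. by rewrite /Q ltr_int. Qed.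
Lemma Qle x y : (Q x <= Q y) = (x <= y). Proof. by rewrite /Q ler_int. Qed.
Lemma Qpos x : 0 < x -> 0 < Q x. Proof. by rewrite /Q ltr0z. Qed.

Lemma frac_lt a b c e : 0 < b -> 0 < e ->
  Q a / Q b < Q c / Q e -> a * e < c * b.
Proof.
move=> hb he; rewrite ltr_pdivrMr ?Qpos // mulrAC ltr_pdivlMr ?Qpos //.
by rewrite -!QM Qlt.
Qed.

Lemma deg_int n d k : 0 < k -> deg_bound n d k -> n * n - 1 - k * (n - k) <= k * d.
Proof.
move=> hk; rewrite /deg_bound => H.
have hQ : Q k != 0 by rewrite gt_eqF ?Qpos.
rewrite -Qle !(QB, QM, Q1).
have -> : Q n * Q n - 1 - Q k * (Q n - Q k) = ((Q n ^+ 2 - 1) / Q k - (Q n - Q k)) * Q k.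
  by field.
by rewrite mulrC ler_pM2l ?Qpos.
Qed.

Lemma alpha_int n1 d1 k1 n2 d2 k2 X Y : 0 < n2 * k1 - n1 * k2 -> 0 < Y ->
  alpha_c n1 d1 k1 n2 d2 k2 < Q X / Q Y ->
  (d2 * n1 - d1 * n2) * Y < X * (n2 * k1 - n1 * k2).
Proof.
move=> hK hY; rewrite /alpha_c.
rewrite -!QM -!QB.
exact: frac_lt.
Qed.
Definition C12' (n1 d1 k1 n2 d2 k2 : int) : int :=
  - n1 * n2 - d2 * n1 + d1 * n2 + k1 * (d2 + n2 - k2).

Lemma case3 n1 s m d1 : 3 <= n1 -> 0 <= m ->
  0 < 3*d1 - 3*(n1-3)*s - 3* m ->
  0 < C12' n1 d1 3 1 ((n1+1-3)*s+m-d1) 0.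
Proof.
move=> h1 hm hu; rewrite /C12'.
have he : 0 <= d1 - (n1-3)*s - m - 1 by timeout 20 lia.
have hp : 0 <= n1 - 2 by timeout 20 lia.
have := mulr_ge0 hp he. timeout 20 lia.
Qed.

Lemma case2a n1 n2 s m d1 : 3 <= n1 -> n1 < 2*n2 -> 0 <= m -> m < n1+n2-3 ->
  0 < 3*d1 - 3*(n1-2)*s - 2* m ->
  n2*n2 - 1 - 1*(n2-1) <= 1*((n1+n2-3)*s+m-d1) ->
  d1 * n2 < ((n1+n2-3)*s+m-d1) * n1 ->
  0 < C12' n1 d1 2 n2 ((n1+n2-3)*s+m-d1) 1.
Proof.
move=> h1 h12 hm hm2 hu hB hsl; rewrite /C12'.
have [e32|ne32] := boolP ((n1 == 3) && (n2 == 2)).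
  move/andP: e32 => [/eqP e1 /eqP e2]; subst n1 n2; timeout 20 lia.
have hqq : 2 <= n2 - 1.
  move: ne32; rewrite negb_and => /orP [/eqP h|/eqP h]; timeout 20 lia.
set u := 3*d1 - 3*(n1-2)*s - 2* m in hu.
set p := n1 - 2. set q := n2 - 1 in hqq *.
have hA : 3*q*(s-n2) >= u - m by rewrite /q /u; timeout 20 lia.
have hp : 1 <= p by rewrite /p; timeout 20 lia.
have hq : 1 <= q by rewrite /q; timeout 20 lia.
have hqp : p + 1 <= 2*q by rewrite /p /q; timeout 20 lia.
have hu3 : m = 0 -> 3 <= u by move=> m0; rewrite /u m0 in hu *; timeout 20 lia.
have hid : q * (3 * (- n1 * n2 - ((n1+n2-3)*s+m-d1) * n1 + d1 * n2 + 2 * (((n1+n2-3)*s+m-d1) + n2 - 1)))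
  = p * (3*q*(s-n2) - (u - m)) + ((q+1)*(2*q-p)* m + (p + q*(p+q+1))* u - 6*q).
  rewrite /p /q /u; ring.
move: hid; set C := (- n1 * n2 - _ + _ + _).
clearbody u p q.
move=> hid.
have hT : 0 < (q+1)*(2*q-p)* m + (p + q*(p+q+1))* u - 6*q.
  have h1' : 0 <= (q+1)*(2*q-p) by apply: mulr_ge0; timeout 20 lia.
  have h2' : 0 <= p + q*(p+q+1) by apply: addr_ge0; [lia|apply: mulr_ge0; lia].
  have [m0|mpos] := boolP (m == 0).
    move/eqP: m0 => m0. have := hu3 m0 => hu3'.
    have := mulr_ge0 h2' (_ : 0 <= u - 3).
    have := mulr_ge0 (_ : 0 <= q) (_ : 0 <= p + q - 1).
    rewrite m0. timeout 20 lia.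
  have := mulr_ge0 h1' (_ : 0 <= m - 1).
  have := mulr_ge0 h2' (_ : 0 <= u - 1).
  have := mulr_gt0 (_ : 0 < q) (_ : 0 < q - 1).
  timeout 20 lia.
have hpA := mulr_ge0 (_ : 0 <= p) (_ : 0 <= 3*q*(s-n2) - (u - m)).
have H : 0 < q * (3 * C) by timeout 20 lia.
rewrite pmulr_rgt0 in H; timeout 20 lia.
Qed.

Lemma case1a n1 n2 s m d1 : 2 <= n1 -> 2*n1 < n2 -> 0 <= m ->
  0 < 3*d1 - 3*(n1-1)*s - 1 * m ->
  n2*n2 - 1 - 2*(n2-2) <= 2*((n1+n2-3)*s+m-d1) ->
  0 < C12' n1 d1 1 n2 ((n1+n2-3)*s+m-d1) 2.
Proof.
move=> h1 h12 hm hu hB; rewrite /C12'.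
set u := 3*d1 - 3*(n1-1)*s - 1 * m in hu.
set p := n1 - 1. set q := n2 - 2.
have hA : 3*q*(2*s-n2) >= 9 + 2* u - 4* m by rewrite /q /u; timeout 20 lia.
have hp : 1 <= p by rewrite /p; timeout 20 lia.
have hq : 3 <= q by rewrite /q; timeout 20 lia.
have hqp : 2* p + 1 <= q by rewrite /p /q; timeout 20 lia.
have hid : q * (3 * (- n1 * n2 - ((n1+n2-3)*s+m-d1) * n1 + d1 * n2 + 1 * (((n1+n2-3)*s+m-d1) + n2 - 2)))
  = p * (3*q*(2*s-n2) - (9 + 2* u - 4* m)) + ((q+2)*(q-2* p)* m + (2* p + q*(p+q+2))* u + 9* p - 6*q).
  rewrite /p /q /u; ring.
move: hid; set C := (- n1 * n2 - _ + _ + _).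
clearbody u p q.
move=> hid.
have hT : 0 < (q+2)*(q-2* p)* m + (2* p + q*(p+q+2))* u + 9* p - 6*q.
  have h1' : 0 <= (q+2)*(q-2* p) by apply: mulr_ge0; timeout 20 lia.
  have h2' : 0 <= 2* p + q*(p+q+2) by apply: addr_ge0; [lia|apply: mulr_ge0; lia].
  have := mulr_ge0 h1' hm.
  have := mulr_ge0 h2' (_ : 0 <= u - 1).
  have := mulr_ge0 (_ : 0 <= q - 1) (_ : 0 <= q - 3).
  have := mulr_ge0 (_ : 0 <= p) (_ : 0 <= q).
  timeout 20 lia.
have hpA := mulr_ge0 (_ : 0 <= p) (_ : 0 <= 3*q*(2*s-n2) - (9 + 2* u - 4* m)).
have H : 0 < q * (3 * C) by timeout 20 lia.
rewrite pmulr_rgt0 in H; timeout 20 lia.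
Qed.

Theorem proposition7p1 (n d a t l m : int) (alpha : rat)
    (n1 d1 k1 n2 d2 k2 : int) :
  4 <= n ->
  type_params n d 3 a t l m ->
  allowable n d 3 t l alpha n1 d1 k1 n2 d2 k2 ->
  0 < C12 n1 d1 k1 n2 d2 k2.
Proof.
move=> hn [hd /andP[ht0 ht1] hE /andP[hm0 hm1]]
  [[[hn1 hn2] [hk1 hk2] [hN hD hK] [hsl hkk] ->] /andP[_ hU] _ hB1 hB2].
have hsl' : d1 * n2 < d2 * n1 by apply: (frac_lt _ _ _ _ _ _ hsl); lia.
have hkk' : k2 * n1 < k1 * n2 by apply: (frac_lt _ _ _ _ _ _ hkk); lia.
have hKp : 0 < n2 * k1 - n1 * k2 by timeout 20 lia.
rewrite -QM -QD in hU.
have hU' := alpha_int _ _ _ _ _ _ _ _ hKp (_ : 0 < 3) hU.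
clear hU hsl hkk.
set s := a + l.
have Fd : d = (n-3)*s + m by rewrite /s; timeout 20 lia.
have Hd2 : d2 = (n1+n2-3)*s+m-d1 by rewrite hN; timeout 20 lia.
have FU : 0 < 3*d1 - 3*(n1-k1)*s - k1 * m.
  have E' := congr1 (fun x => x * (k1 * n)) hE.
  have Id : n * (3*d1 - 3*(n1-k1)*s - k1 * m)
      = (l*n+t)*(n2 * k1 - n1 * k2) - (d2 * n1 - d1 * n2) * 3.
    move: E' => /=; rewrite /s.
    have -> : k2 = 3 - k1 by timeout 20 lia.
    have -> : d2 = d - d1 by timeout 20 lia.
    rewrite hd -hN => E'. timeout 30 lia.
  have : 0 < n * (3*d1 - 3*(n1-k1)*s - k1 * m) by rewrite Id; timeout 20 lia.
  by rewrite pmulr_rgt0 //; timeout 20 lia.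
rewrite /C12 Hd2 in hsl' hB2 *.
clearbody s.
have : k1 = 1 \/ k1 = 2 \/ k1 = 3 by timeout 20 lia.
case=> [e1|[e1|e1]]; subst k1.
- have e2 : k2 = 2 by timeout 20 lia.
  subst k2.
  case: hB2 => [[//]|[_ hB2]].
  have hB2' := deg_int _ _ _ (_ : 0 < 2) hB2. move: hB2' => /(_ isT) hB2'.
  have [n11|n1ge] := boolP (n1 == 1).
    move/eqP: n11 => n11; subst n1.
    have := mulr_ge0 (_ : 0 <= d1 - 1) (_ : 0 <= n2).
    timeout 20 lia.
  apply: (case1a _ _ _ _ _ _ _ hm0 FU hB2'); timeout 20 lia.
- have e2 : k2 = 1 by timeout 20 lia.
  subst k2.
  case: hB2 => [[//]|[_ hB2]].
  have hB2' := deg_int _ _ _ (_ : 0 < 1) hB2. move: hB2' => /(_ isT) hB2'.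
  have hB1' := deg_int _ _ _ (_ : 0 < 2) hB1. move: hB1' => /(_ isT) hB1'.
  have [n11|n1ge] := boolP (n1 == 1).
    move/eqP: n11 => n11; subst n1.
    have := mulr_ge0 (_ : 0 <= d1 - 1) (_ : 0 <= n2).
    have := mulr_ge0 (_ : 0 <= n2) (_ : 0 <= n2 - 1).
    timeout 20 lia.
  have [n12|n1ge2] := boolP (n1 == 2).
    move/eqP: n12 => n12; subst n1.
    have := mulr_ge0 (_ : 0 <= d1 - 2) (_ : 0 <= n2).
    timeout 20 lia.
  apply: (case2a _ _ _ _ _ _ _ hm0 _ FU hB2' hsl'); timeout 20 lia.
- have e2 : k2 = 0 by timeout 20 lia.
  subst k2.
  case: hB2 => [[_ e2]|[//]].
  subst n2.
  apply: (case3 _ _ _ _ _ hm0 FU); timeout 20 lia.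
Qed.
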